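(* Let $G^1=(V,A)$ be a directed graph, in which no two arcs join the same pair of vertices (in either direction) and there are no loops, with capacities $c\colon A\to\mathbb{Z}_{>0}$, distinct vertices $s,t$, and an integer $R\ge 0$. Let $G^2$ be the underlying undirected graph of $G^1$, where the edge $uv$ coming from arc $(u,v)$ gets weight $w(uv)=c(u,v)/2$. For each $v\in V$ let $\beta_v$ be the sum of $c(a)$ over all arcs $a$ of $G^1$ directed into $v$, and set $d_v=\beta_v/2$ for $v\notin\{s,t\}$, $d_s=R/2+\beta_s/2$, $d_t=-R/2+\beta_t/2$. Then there is an all-or-nothing $s$-$t$-flow in $G^1$ of value $R$ (a flow $f$ with $f(a)\in\{0,c(a)\}$ for every arc $a$) if and only if there is an orientation of $G^2$ in which, for every vertex $v$, the total weight of the edges directed out of $v$ equals $d_v$.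
   Context: An $s$-$t$-flow in a directed graph with capacities $c$ is a function $f\colon A\to\mathbb{Z}_{\ge0}$ with $0\le f(a)\le c(a)$ for all arcs and flow conservation (inflow equals outflow) at every vertex other than $s,t$; its value is the outflow of $s$ minus the inflow of $s$. An orientation of an undirected graph chooses a direction for each edge. *)

(* Defs.v *)
From mathcomp Require Import all_boot all_order all_algebra.
Set Implicit Arguments. Unset Strict Implicit. Unset Printing Implicit Defensive.
Import Order.TTheory GRing.Theory Num.Theory.
From mathcomp Require Import rat.
Local Open Scope ring_scope.

(* Capacities are a
   function [c : V -> V -> nat], relevant only on arcs. *)

Definition simple_digraph (V : finType) (arc : rel V) : Prop :=
  (forall v, ~~ arc v v) /\ (forall u v, arc u v -> ~~ arc v u).

Definition inflow (V : finType) (arc : rel V) (g : V -> V -> nat) (v : V) : nat :=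
  (\sum_(u | arc u v) g u v)%N.
Definition outflow (V : finType) (arc : rel V) (g : V -> V -> nat) (v : V) : nat :=
  (\sum_(u | arc v u) g v u)%N.

Definition is_flow (V : finType) (arc : rel V) (c : V -> V -> nat) (s t : V)
    (f : V -> V -> nat) : Prop :=
  (forall u v, arc u v -> (f u v <= c u v)%N) /\
  (forall v, v != s -> v != t -> inflow arc f v = outflow arc f v).

Definition flow_value (V : finType) (arc : rel V) (f : V -> V -> nat) (s : V) : int :=
  (outflow arc f s)%:Z - (inflow arc f s)%:Z.

Definition all_or_nothing (V : finType) (arc : rel V) (c : V -> V -> nat)
    (f : V -> V -> nat) : Prop :=
  forall u v, arc u v -> f u v = 0%N \/ f u v = c u v.

Definition uedge (V : finType) (arc : rel V) : rel V :=
  fun u v => arc u v || arc v u.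

Definition uweight (V : finType) (arc : rel V) (c : V -> V -> nat) (u v : V) : rat :=
  if arc u v then (c u v)%:R / 2%:R else (c v u)%:R / 2%:R.

Definition is_orientation (V : finType) (arc : rel V) (D : rel V) : Prop :=
  (forall u v, D u v -> uedge arc u v) /\
  (forall u v, uedge arc u v -> D u v = ~~ D v u).

Definition out_weight (V : finType) (arc : rel V) (c : V -> V -> nat) (D : rel V)
    (v : V) : rat :=
  \sum_(u | D v u) uweight arc c v u.

Definition beta (V : finType) (arc : rel V) (c : V -> V -> nat) (v : V) : nat :=
  (\sum_(u | arc u v) c u v)%N.

Definition demand (V : finType) (arc : rel V) (c : V -> V -> nat) (s t : V) (R : nat)
    (v : V) : rat :=
  if v == s then (R%:R / 2%:R + (beta arc c v)%:R / 2%:R)%R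
  else if v == t then (- (R%:R / 2%:R) + (beta arc c v)%:R / 2%:R)%R
  else ((beta arc c v)%:R / 2%:R)%R.

(* Main.v *)
Require Import Defs.
From mathcomp Require Import all_boot all_order all_algebra.
Import Order.TTheory GRing.Theory Num.Theory.
Local Open Scope ring_scope.

Lemma key (V : finType) (arc : rel V) (c : V -> V -> nat) (D : rel V) (f : V -> V -> nat)
  (Hsimple : simple_digraph arc) (HD : is_orientation arc D)
  (Hf : forall u v, arc u v -> f u v = if D u v then c u v else 0%N) (v : V) :
  2%:R * out_weight arc c D v =
  (outflow arc f v)%:R + (beta arc c v)%:R - (inflow arc f v)%:R :> rat.
Proof.
case: Hsimple => _ Has; case: HD => HD1 HD2.
rewrite /out_weight /outflow /inflow /beta !natr_sum mulr_sumr.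
rewrite [in RHS]big_mkcond [X in _ + X - _]big_mkcond [X in _ - X]big_mkcond /=.
rewrite big_mkcond -big_split -sumrB /=.
apply: eq_bigr => u _.
case: (boolP (arc v u)) => Hvu.
  have Huv : ~~ arc u v by apply: Has.
  rewrite (negbTE Huv) Hf // /uweight Hvu.
  by case: (D v u); rewrite ?mulr0 ?addr0 ?subr0 // mulrC divfK // pnatr_eq0.
case: (boolP (arc u v)) => Huv.
  have Hue : uedge arc u v by rewrite /uedge Huv.
  rewrite Hf // (HD2 _ _ Hue) /uweight (negbTE Hvu).
  case: (D v u) => /=.
    by rewrite mulrC divfK ?pnatr_eq0 // add0r subr0.
  by rewrite add0r subrr.
case: (boolP (D v u)) => Hd.
  by move: (HD1 _ _ Hd); rewrite /uedge (negbTE Hvu) (negbTE Huv).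
by rewrite subr0 addr0.
Qed.

Lemma sum_out_in (V : finType) (arc : rel V) (f : V -> V -> nat) :
  \sum_v ((outflow arc f v)%:R - (inflow arc f v)%:R) = 0 :> rat.
Proof.
rewrite sumrB -!natr_sum; apply/eqP; rewrite subr_eq0 eqr_nat; apply/eqP.
rewrite /outflow /inflow.
under eq_bigr do rewrite big_mkcond.
under [RHS]eq_bigr do rewrite big_mkcond.
by rewrite [RHS]exchange_big.
Qed.

Lemma two_demand (V : finType) (arc : rel V) (c : V -> V -> nat) (s t : V) (R : nat) v :
  s != t ->
  2%:R * demand arc c s t R v =
  (if v == s then R%:R else if v == t then - R%:R else 0) + (beta arc c v)%:R :> rat.
Proof.
move=> Hst; rewrite /demand.
have H2 : (2%:R : rat) != 0 by rewrite pnatr_eq0.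
case: (v == s); last case: (v == t).
- by rewrite mulrDr !(mulrC 2%:R) !divfK.
- by rewrite mulrDr mulrN !(mulrC 2%:R) !divfK.
- by rewrite add0r mulrC divfK.
Qed.

Lemma nat_int_rat (a b r : nat) :
  (a%:R - b%:R : rat) = r%:R -> a%:Z - b%:Z = r%:Z.
Proof.
move=> H; apply: (@intr_inj rat); rewrite rmorphB /=.
exact: H.
Qed.

Theorem mainTheorem2 (V : finType) (arc : rel V) (c : V -> V -> nat) (s t : V) (R : nat)
  (Hsimple : simple_digraph arc)
  (Hcap : forall u v, arc u v -> (0 < c u v)%N)
  (Hst : s != t) :
  (exists f : V -> V -> nat,
      is_flow arc c s t f /\ all_or_nothing arc c f /\ flow_value arc f s = R%:Z)
  <->
  (exists D : rel V,
      is_orientation arc D /\ forall v, out_weight arc c D v = demand arc c s t R v).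
Proof.
have H2 : (2%:R : rat) != 0 by rewrite pnatr_eq0.
have Has := proj2 Hsimple.
split.
- move=> [f [[Hfc Hcons] [Haon Hval]]].
  pose D := fun u v => (arc u v && (f u v == c u v)) || (arc v u && (f v u == 0%N)).
  have Hex : forall u v, arc u v -> (f u v == c u v) = ~~ (f u v == 0%N).
    move=> u v Huv; have := Hcap _ _ Huv.
    by case: (Haon _ _ Huv) => ->; rewrite ?eqxx //=; case: (c u v).
  have HD : is_orientation arc D.
    split.
      by move=> u v; rewrite /D /uedge => /orP [/andP [-> _]|/andP [-> _]]; rewrite ?orbT.
    move=> u v /orP [] Huv.
      have Hvu := Has _ _ Huv.
      by rewrite /D Huv (negbTE Hvu) /= orbF Hex.
    have Hvu := Has _ _ Huv.
    by rewrite /D Huv (negbTE Hvu) /= orbF Hex // negbK.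
  have Hf : forall u v, arc u v -> f u v = if D u v then c u v else 0%N.
    move=> u v Huv; rewrite /D Huv (negbTE (Has _ _ Huv)) /= orbF.
    have := Hcap _ _ Huv; by case: (Haon _ _ Huv) => ->; rewrite ?eqxx //; case: (c u v).
  exists D; split => // v.
  apply: (mulfI H2); rewrite (@key _ _ _ _ _ Hsimple HD Hf) two_demand //.
  pose g w := (outflow arc f w)%:R - (inflow arc f w)%:R : rat.
  have Hg0 : forall w, w != s -> w != t -> g w = 0.
    by move=> w Hs Ht; rewrite /g Hcons // subrr.
  have Hgs : g s = R%:R.
    move: Hval; rewrite /flow_value => /(congr1 (fun z : int => z%:~R : rat)).
    by rewrite rmorphB.
  have Hgt : g t = - R%:R.
    have := @sum_out_in _ arc f; rewrite (bigD1 s) //= (bigD1 t) 1?eq_sym //=.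
    rewrite big1; last by move=> w /andP [Hs Ht]; exact: Hg0.
    rewrite -/(g s) -/(g t) Hgs addr0 => /eqP; rewrite addrC addr_eq0 => /eqP //.
  rewrite addrAC; congr (_ + _).
  case: (eqVneq v s) => [->|Hvs]; first by rewrite -/(g s) Hgs.
  case: (eqVneq v t) => [->|Hvt]; first by rewrite -/(g t) Hgt.
  exact: Hg0.
- move=> [D [HD Hw]].
  pose f := fun u v => if D u v then c u v else 0%N.
  have Hf : forall u v, arc u v -> f u v = if D u v then c u v else 0%N by [].
  have Hg : forall v, (outflow arc f v)%:R - (inflow arc f v)%:R =
     (if v == s then R%:R else if v == t then - R%:R else 0) :> rat.
    move=> v; have := @key _ _ _ _ _ Hsimple HD Hf v; rewrite Hw two_demand // => /eqP.
    by rewrite addrAC => /eqP /addIr ->.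
  exists f; split; [split|split].
  + by move=> u v _; rewrite /f; case: (D u v).
  + move=> v Hs Ht; have := Hg v; rewrite (negbTE Hs) (negbTE Ht) => /eqP.
    by rewrite subr_eq0 eqr_nat => /eqP.
  + by move=> u v _; rewrite /f; case: (D u v); [right|left].
  + apply: nat_int_rat; by rewrite Hg eqxx.
Qed.
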